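(* Let $\|\cdot\|$ be a norm on $\mathbb{R}^m$ with dual norm $\|\cdot\|_*$. Let $\mathbf{z}_i=(\mathbf{x}_i,y_i)\in\mathbb{R}^m$, $i=1,\ldots,N$, be observations with $\|\mathbf{z}_i\|\le R$ for all $i$, and let $\mathbf{Z}\in\mathbb{R}^{m\times N}$ be the matrix with columns $\mathbf{z}_i$. Let $\mathcal{B}\subseteq\mathbb{R}^{m-1}$, $\gamma_N>0$, and let $\hat{\boldsymbol{\beta}}$ be an optimal solution of $$\min_{\boldsymbol{\beta}}\ \|(-\boldsymbol{\beta},1)\|_*\quad\text{s.t.}\quad \|(-\boldsymbol{\beta},1)'\mathbf{Z}\|_1\le\gamma_N,\ \ \boldsymbol{\beta}\in\mathcal{B}.$$ Let $\boldsymbol{\beta}^*\in\mathbb{R}^{m-1}$ satisfy $\|\mathbf{Z}'(-\boldsymbol{\beta}^*,1)\|_1\le\gamma_N$ and $\boldsymbol{\beta}^*\in\mathcal{B}$. Define $$\mathcal{A}(\boldsymbol{\beta}^* )=\operatorname{cone}\{\mathbf{v}\in\mathbb{R}^m:\ \|(-\boldsymbol{\beta}^*,1)+\mathbf{v}\|_*\le\|(-\boldsymbol{\beta}^*,1)\|_*\}\cap\mathbb{S}^m,$$ and assume there is $\underline{\alpha}>0$ with $\inf_{\mathbf{v}\in\mathcal{A}(\boldsymbol{\beta}^* )}\mathbf{v}'\mathbf{Z}\mathbf{Z}'\mathbf{v}\ge\underline{\alpha}$. Then $$\|\hat{\boldsymbol{\beta}}-\boldsymbol{\beta}^*\|_2\le\frac{2R\gamma_N}{\underline{\alpha}}\Psi(\boldsymbol{\beta}^*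 ),\qquad \Psi(\boldsymbol{\beta}^* )=\sup_{\mathbf{v}\in\mathcal{A}(\boldsymbol{\beta}^* )}\|\mathbf{v}\|_*.$$
   Context: $\mathbb{S}^m$ denotes the unit Euclidean sphere in $\mathbb{R}^m$; $\operatorname{cone}(S)$ is the cone generated by $S$. The dual norm is $\|\boldsymbol{\theta}\|_*=\sup_{\|\mathbf{z}\|\le1}\boldsymbol{\theta}'\mathbf{z}$; $(-\boldsymbol{\beta},1)\in\mathbb{R}^m$ is $-\boldsymbol{\beta}$ with coordinate $1$ appended. *)

(* Defs.v *)
From HB Require Import structures.
From mathcomp Require Import all_boot all_order all_algebra.
From mathcomp Require Import boolp classical_sets reals.
Set Implicit Arguments. Unset Strict Implicit. Unset Printing Implicit Defensive.
Import Order.TTheory GRing.Theory Num.Theory.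
Local Open Scope ring_scope.
Local Open Scope classical_set_scope.

Definition is_norm (R : realType) (m : nat) (nrm : 'cV[R]_m -> R) : Prop :=
  [/\ forall x, 0 <= nrm x,
      forall x, nrm x = 0 -> x = 0,
      forall (a : R) x, nrm (a *: x) = `|a| * nrm x
    & forall x y, nrm (x + y) <= nrm x + nrm y].

Definition dotv (R : realType) (m : nat) (u v : 'cV[R]_m) : R := (u^T *m v) 0 0.

Definition dual_norm (R : realType) (m : nat) (nrm : 'cV[R]_m -> R)
  (theta : 'cV[R]_m) : R :=
  sup [set dotv theta z | z in [set z | nrm z <= 1]].

Definition norm2 (R : realType) (m : nat) (v : 'cV[R]_m) : R :=
  Num.sqrt (\sum_(i < m) v i 0 ^+ 2).

Definition norm1_row (R : realType) (N : nat) (r : 'rV[R]_N) : R :=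
  \sum_(j < N) `|r 0 j|.

Definition sphere (R : realType) (m : nat) : set 'cV[R]_m :=
  [set v | norm2 v = 1].

Definition cone (R : realType) (m : nat) (S : set 'cV[R]_m) : set 'cV[R]_m :=
  [set v | exists (k : nat) (c : 'I_k -> R) (s : 'I_k -> 'cV[R]_m),
      (forall i, 0 <= c i) /\ (forall i, S (s i)) /\
      v = \sum_(i < k) c i *: s i].

Definition ext (R : realType) (n : nat) (beta : 'cV[R]_n) : 'cV[R]_(n + 1) :=
  col_mx (- beta) (1 : 'cV[R]_1).

Definition Aset (R : realType) (n : nat) (nrm : 'cV[R]_(n + 1) -> R)
  (beta : 'cV[R]_n) : set 'cV[R]_(n + 1) :=
  cone [set v | dual_norm nrm (ext beta + v) <= dual_norm nrm (ext beta)]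
  `&` @sphere R (n + 1).

(* Main.v *)
Require Import Defs.
From HB Require Import structures.
From mathcomp Require Import all_boot all_order all_algebra.
From mathcomp Require Import boolp classical_sets reals.
From mathcomp Require Import topology normedtype derive.
From mathcomp Require Import lra ring.
Import Order.TTheory GRing.Theory Num.Theory Num.Def.
Import numFieldNormedType.Exports.
Local Open Scope ring_scope.
Local Open Scope classical_set_scope.

Section Aux.
Variable R : realType.

Lemma nrm0 m (nrm : 'cV[R]_m -> R) : is_norm nrm -> nrm 0 = 0.
Proof.
case=> _ _ hZ _; have := hZ 0 0; rewrite scale0r normr0 mul0r; exact.
Qed.

Lemma nrmN m (nrm : 'cV[R]_m -> R) x : is_norm nrm -> nrm (- x) = nrm x.
Proof.
case=> _ _ hZ _; rewrite -scaleN1r hZ normrN normr1 mul1r //.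
Qed.

Lemma nrm_sum_le m (nrm : 'cV[R]_m -> R) (z : 'cV[R]_m) : is_norm nrm ->
  nrm z <= \sum_i `|z i 0| * nrm (delta_mx i 0).
Proof.
move=> hn; have [_ _ hZ hT] := hn.
rewrite {1}(matrix_sum_delta z).
under eq_bigr do rewrite big_ord1.
elim/big_ind2: _ => //.
- by rewrite nrm0.
- move=> a b c d h1 h2; exact: le_trans (hT _ _) (lerD h1 h2).
- by move=> i _; rewrite hZ.
Qed.

Lemma coord_le_mxnorm p q (z : 'M[R]_(p.+1, q.+1)) i j : `|z i j| <= `|z|.
Proof.
have /mapP[k Hk ->] : `|z i j| \in [seq `|z x.1 x.2| | x : 'I_p.+1 * 'I_q.+1].
  by apply/mapP; exists (i, j) => //=; rewrite mem_enum.
by rewrite [leRHS]/normr /= mx_normrE; apply/bigmax_geP; right => /=; exists k.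
Qed.

Lemma nrm_lower m (nrm : 'cV[R]_m -> R) : is_norm nrm ->
  exists2 c, 0 < c & forall (z : 'cV[R]_m) i, c * `|z i 0| <= nrm z.
Proof.
case: m nrm => [|m] nrm hn; first by exists 1 => // z; case.
have [hpos hdef hZ hT] := hn.
pose f (r : 'rV[R]_m.+1) := nrm r^T.
pose K := \sum_i nrm (delta_mx i 0 : 'cV[R]_m.+1).
have K0 : 0 <= K by apply: sumr_ge0.
have fle r : f r <= K * `|r|.
  apply: le_trans (@nrm_sum_le _ nrm r^T hn) _.
  rewrite mulr_suml; apply: ler_sum => i _.
  rewrite mulrC ler_wpM2l //; rewrite mxE; exact: coord_le_mxnorm.
have fdiff x y : `|f x - f y| <= K * `|x - y|.
  apply: le_trans (fle (x - y)).
  rewrite /f linearB /=.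
  have t1 : nrm x^T <= nrm (x^T - y^T) + nrm y^T.
    by have := hT (x^T - y^T) y^T; rewrite subrK.
  have t2 : nrm y^T <= nrm (x^T - y^T) + nrm x^T.
    by have := hT (y^T - x^T) x^T; rewrite subrK -opprB (@nrmN _ nrm _ hn).
  rewrite ler_norml; apply/andP; split; lra.
have fc : continuous f.
  move=> x; apply/(@cvgrPdist_lt _ _ _ (nbhs x) (nbhs_filter x) f (f x)) => e e0.
  apply/nbhs_ballP; exists (e / (K + 1)).
    by rewrite /= divr_gt0 // ltr_wpDl.
  move=> y; rewrite -ball_normE /= => hy; apply: le_lt_trans (fdiff x y) _.
  have : (K + 1) * `|x - y| < e.
    by rewrite mulrC -ltr_pdivlMr // ltr_wpDl.
  apply: le_lt_trans; rewrite ler_wpM2r // lerDl //.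
pose S := [set r : 'rV[R]_m.+1 | `|r| = 1].
have cS : compact S.
  apply: bounded_closed_compact.
    exists 1; split => // M M1 r; rewrite /S /= => ->; exact: ltW.
  have -> : S = normr @^-1` [set 1] by [].
  apply: preimage_closed; last exact: closed_eq.
  by move=> x _; apply: norm_continuous.
have S0 : S !=set0.
  pose r0 := (const_mx 1 : 'rV[R]_m.+1).
  have r00 : r0 != 0.
    apply/eqP => /matrixP /(_ 0 0); rewrite !mxE => /eqP; rewrite oner_eq0 //.
  exists (`|r0|^-1 *: r0); rewrite /S /= normrZ normfV normr_id mulVf // normr_eq0 //.
have [c0 c0S cmin] := EVT_min_rV S0 cS (continuous_subspaceT fc).
have c0S' : S c0 by rewrite inE in c0S.
have mu0 : 0 < f c0.
  rewrite lt_def hpos andbT; apply/eqP => /hdef /eqP.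
  rewrite -trmx0 (inj_eq (@trmx_inj _ _ _)) => /eqP c00.
  by move: c0S'; rewrite /S /= c00 normr0 => /eqP; rewrite eq_sym oner_eq0.
exists (f c0) => // z i.
have [->|z0] := eqVneq z 0; first by rewrite mxE normr0 mulr0 (@nrm0 _ nrm hn).
have zt0 : `|z^T| != 0 by rewrite normr_eq0 -trmx0 (inj_eq (@trmx_inj _ _ _)).
have : f c0 <= f (`|z^T|^-1 *: z^T).
  apply: cmin; rewrite inE /S /= normrZ normfV normr_id mulVf //.
rewrite /f linearZ /= trmxK hZ normfV normr_id => h.
have h2 : nrm c0^T * `|z^T| <= nrm z.
  rewrite -[leRHS](mulVKf zt0) mulrC ler_wpM2l //.
have := @coord_le_mxnorm _ _ z^T 0 i; rewrite mxE => h3.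
apply: le_trans h2; rewrite ler_wpM2l // ltW //.
Qed.

Lemma dotvE m (u v : 'cV[R]_m) : dotv u v = \sum_i u i 0 * v i 0.
Proof. by rewrite /dotv mxE; apply: eq_bigr => i _; rewrite mxE. Qed.

Lemma dotvZ m (u v : 'cV[R]_m) a : dotv u (a *: v) = a * dotv u v.
Proof. by rewrite /dotv -scalemxAr mxE. Qed.

Lemma dotv0 m (u : 'cV[R]_m) : dotv u 0 = 0.
Proof. by rewrite /dotv mulmx0 mxE. Qed.

Section Dual.
Variables (m : nat) (nrm : 'cV[R]_m -> R) (hn : is_norm nrm) (c : R)
  (c0 : 0 < c) (hc : forall (z : 'cV[R]_m) i, c * `|z i 0| <= nrm z).

Lemma dotv_bound th z : nrm z <= 1 -> dotv th z <= (\sum_i `|th i 0|) / c.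
Proof.
move=> hz; rewrite dotvE mulr_suml; apply: le_trans (ler_norm _) _.
apply: le_trans (ler_norm_sum _ _ _) _.
apply: ler_sum => i _; rewrite normrM ler_wpM2l // -(ler_pM2l c0) mulfV ?gt_eqF //.
exact: le_trans (hc z i) hz.
Qed.

Lemma dual_has_sup th : has_sup [set dotv th z | z in [set z | nrm z <= 1]].
Proof.
split; first by exists (dotv th 0), 0 => //=; rewrite (@nrm0 _ nrm hn).
by exists ((\sum_i `|th i 0|) / c) => _ [z hz <-]; apply: dotv_bound.
Qed.

Lemma dual_ge th z : nrm z <= 1 -> dotv th z <= dual_norm nrm th.
Proof.
by move=> hz; apply: sup_upper_bound; [exact: dual_has_sup | exists z].
Qed.

Lemma dual_le th : dual_norm nrm th <= (\sum_i `|th i 0|) / c.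
Proof.
apply: ge_sup; first by exists (dotv th 0), 0 => //=; rewrite (@nrm0 _ nrm hn).
by move=> _ [z hz <-]; apply: dotv_bound.
Qed.

Lemma dual_ge0 th : 0 <= dual_norm nrm th.
Proof.
by rewrite -(@dotv0 _ th); apply: dual_ge; rewrite (@nrm0 _ nrm hn).
Qed.

Lemma dual0 : dual_norm nrm 0 = 0.
Proof.
apply/eqP; rewrite eq_le dual_ge0 andbT.
apply: le_trans (dual_le 0) _.
by rewrite big1 ?mul0r // => i _; rewrite mxE normr0.
Qed.

Lemma dotv_abs th z : `|dotv th z| <= dual_norm nrm th * nrm z.
Proof.
have [hpos hdef hZ hT] := hn.
have [z0|nz0] := eqVneq (nrm z) 0.
  by rewrite (hdef _ z0) dotv0 normr0 mulr_ge0 // dual_ge0.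
have nzp : 0 < nrm z by rewrite lt_def nz0 hpos.
pose w := (nrm z)^-1 *: z.
have hw : nrm w <= 1 by rewrite /w hZ normfV ger0_norm // mulVf.
have hw' : nrm (- w) <= 1 by rewrite (@nrmN _ nrm _ hn).
have e1 := @dual_ge th _ hw.
have e2 := @dual_ge th _ hw'.
have ez : z = nrm z *: w by rewrite /w scalerA mulfV // scale1r.
rewrite {1}ez dotvZ normrM ger0_norm // mulrC ler_wpM2r // ler_norml.
rewrite -scaleN1r dotvZ in e2.
apply/andP; split; lra.
Qed.

End Dual.
Lemma norm2_ge0 m (v : 'cV[R]_m) : 0 <= norm2 v.
Proof. exact: sqrtr_ge0. Qed.

Lemma norm2Z m (v : 'cV[R]_m) a : norm2 (a *: v) = `|a| * norm2 v.
Proof.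
rewrite /norm2 -sqrtr_sqr -sqrtrM ?sqr_ge0 //; congr Num.sqrt.
rewrite mulr_sumr; apply: eq_bigr => i _; rewrite mxE exprMn //.
Qed.

Lemma norm2N m (v : 'cV[R]_m) : norm2 (- v) = norm2 v.
Proof. by rewrite -scaleN1r norm2Z normrN normr1 mul1r. Qed.

Lemma norm2_eq0 m (v : 'cV[R]_m) : norm2 v = 0 -> v = 0.
Proof.
rewrite /norm2 => /eqP; rewrite sqrtr_eq0 => hs.
have h0 : \sum_(i < m) v i 0 ^+ 2 = 0.
  by apply/eqP; rewrite eq_le hs sumr_ge0 // => i _; rewrite sqr_ge0.
apply/matrixP => i j; rewrite (ord1 j) mxE.
have /eqP := h0; rewrite psumr_eq0 => [/allP /(_ i) |i0 _]; last exact: sqr_ge0.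
by rewrite mem_index_enum /= => /(_ isT); rewrite sqrf_eq0 => /eqP.
Qed.

Lemma coord_le_norm2 m (v : 'cV[R]_m) i : `|v i 0| <= norm2 v.
Proof.
rewrite /norm2 -sqrtr_sqr ler_sqrt ?sumr_ge0 // => [|j _]; last exact: sqr_ge0.
by rewrite (bigD1 i) //= lerDl sumr_ge0 // => j _; rewrite sqr_ge0.
Qed.

Lemma dotvDl m (u w z : 'cV[R]_m) : dotv (u - w) z = dotv u z - dotv w z.
Proof. by rewrite /dotv linearB /= mulmxBl mxE [in RHS]mxE; rewrite !mxE. Qed.

Lemma dotvZl m (u z : 'cV[R]_m) a : dotv (a *: u) z = a * dotv u z.
Proof. by rewrite /dotv linearZ /= -scalemxAl mxE. Qed.

Lemma rowdot m N (u : 'cV[R]_m) (Z : 'M[R]_(m, N)) j :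
  (u^T *m Z) 0 j = dotv u (col j Z).
Proof. by rewrite /dotv !mxE; apply: eq_bigr => i _; rewrite !mxE. Qed.

Lemma quad m N (v : 'cV[R]_m) (Z : 'M[R]_(m, N)) :
  (v^T *m Z *m Z^T *m v) 0 0 = \sum_j dotv v (col j Z) ^+ 2.
Proof.
rewrite -mulmxA mxE; apply: eq_bigr => j _.
rewrite rowdot expr2; congr (_ * _).
by rewrite /dotv !mxE; apply: eq_bigr => i _; rewrite !mxE mulrC.
Qed.

Lemma norm2_ext n (b1 b2 : 'cV[R]_n) : norm2 (ext b1 - ext b2) = norm2 (b1 - b2).
Proof.
rewrite /ext opp_col_mx add_col_mx subrr /norm2 big_split_ord /=.
rewrite [X in _ + X]big1 ?addr0 => [|i _]; last by rewrite col_mxEd mxE expr0n.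
apply: congr1; apply: eq_bigr => i _; rewrite col_mxEu !mxE.
by rewrite -sqrrN opprB opprK addrC.
Qed.

Lemma ext_neq0 n (b : 'cV[R]_n) : ext b != 0.
Proof.
apply/eqP => /matrixP /(_ (rshift n 0) 0).
by rewrite /ext col_mxEd !mxE /= => /eqP; rewrite oner_eq0.
Qed.

Lemma norm2_gt0 m (v : 'cV[R]_m) : v != 0 -> 0 < norm2 v.
Proof.
move=> v0; rewrite lt_def norm2_ge0 andbT; apply/eqP => /norm2_eq0 h.
by rewrite h eqxx in v0.
Qed.

End Aux.
Arguments nrm_lower {R m nrm}.
Arguments dual_le {R m nrm} hn {c} c0 hc th.
Arguments dual0 {R m nrm} hn {c} c0 hc.
Arguments dual_ge0 {R m nrm} hn {c} c0 hc th.
Arguments dotv_abs {R m nrm} hn {c} c0 hc th z.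
Arguments coord_le_norm2 {R m} v i.
Arguments ext_neq0 {R n} b.
Arguments norm2_gt0 {R m v}.
Arguments quad {R m N}.
Arguments rowdot {R m N}.
Arguments dotvDl {R m}.
Arguments dotvZl {R m}.
Arguments norm2Z {R m}.
Arguments norm2N {R m}.
Arguments norm2_ext {R n}.

Theorem theorem3p6 (R : realType) (n N : nat)
  (nrm : 'cV[R]_(n + 1) -> R) (Z : 'M[R]_(n + 1, N))
  (Rad gammaN alpha : R) (B : set 'cV[R]_n) (betahat betastar : 'cV[R]_n) :
  is_norm nrm ->
  (forall i : 'I_N, nrm (col i Z) <= Rad) ->
  0 < gammaN ->
  (* betahat is an optimal solution of the program *)
  (norm1_row ((ext betahat)^T *m Z) <= gammaN /\ B betahat) ->
  (forall beta, norm1_row ((ext beta)^T *m Z) <= gammaN -> B beta ->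
     dual_norm nrm (ext betahat) <= dual_norm nrm (ext beta)) ->
  (* betastar is feasible *)
  norm1_row ((Z^T *m ext betastar)^T) <= gammaN ->
  B betastar ->
  0 < alpha ->
  (forall v, Aset nrm betastar v -> alpha <= (v^T *m Z *m Z^T *m v) 0 0) ->
  norm2 (betahat - betastar) <=
    2 * Rad * gammaN / alpha *
    sup [set dual_norm nrm v | v in Aset nrm betastar].
Proof.
move=> hn hR hg [hfh hBh] hopt hfs hBs ha hA.
have [c c0 hc] := nrm_lower hn.
have [hpos hdef hZ hT] := hn.
set es := ext betastar; set eh := ext betahat.
set P := sup _.
have hfs' : norm1_row (es^T *m Z) <= gammaN by rewrite -(trmxK Z) -trmx_mul.
have Pub : forall u, Aset nrm betastar u -> dual_norm nrm u <= (n + 1)%:R / c.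
  move=> u [_ hu]; apply: le_trans (dual_le hn c0 hc u) _.
  apply: ler_wpM2r; first by rewrite invr_ge0 ltW.
  have -> : (n + 1)%:R = \sum_(i < n + 1) (1 : R) by rewrite sumr_const card_ord.
  apply: ler_sum => i _; rewrite -hu; exact: coord_le_norm2.
have hasP : forall u, Aset nrm betastar u -> has_sup [set dual_norm nrm v | v in Aset nrm betastar].
  move=> u hu; split; first by exists (dual_norm nrm u), u.
  by exists ((n + 1)%:R / c) => _ [v hv <-]; apply: Pub.
have leSup : forall u, Aset nrm betastar u -> dual_norm nrm u <= P.
  by move=> u hu; apply: sup_upper_bound; [exact: hasP hu | exists u].
have es0 := ext_neq0 betastar.
have ns0 := norm2_gt0 es0.
pose u0 := (norm2 es)^-1 *: (- es).
have Au0 : Aset nrm betastar u0.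
  split.
    exists 1%N, (fun _ => (norm2 es)^-1), (fun _ => - es); split.
      by move=> _; rewrite invr_ge0 ltW.
    split; last by rewrite big_ord1.
    by move=> _ /=; rewrite subrr (dual0 hn c0 hc) (dual_ge0 hn c0 hc).
  by rewrite /sphere /= /u0 norm2Z norm2N normfV ger0_norm ?ltW // mulVf ?gt_eqF.
have P0 : 0 <= P by apply: le_trans (dual_ge0 hn c0 hc u0) (leSup _ Au0).
have Rad0 : 0 <= Rad.
  have [//|Rneg] := leP 0 Rad.
  have := hA _ Au0; rewrite quad big1 => [|j _]; first by move=> h; lra.
  by have := hR j; have := hpos (col j Z); lra.
have RHS0 : 0 <= 2 * Rad * gammaN / alpha * P.
  by apply: mulr_ge0 => //; apply: divr_ge0; [apply: mulr_ge0; [apply: mulr_ge0|apply: ltW] | apply: ltW].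
pose v := eh - es.
have hv : dual_norm nrm (es + v) <= dual_norm nrm es.
  by rewrite /v addrC subrK; apply: hopt.
have -> : norm2 (betahat - betastar) = norm2 v by rewrite /v norm2_ext.
have [v0|vn0] := eqVneq v 0; first by rewrite v0 -(scale0r (0 : 'cV[R]_(n + 1))) norm2Z normr0 mul0r.
have s0 := norm2_gt0 vn0.
set s := norm2 v in s0 *.
pose u := s^-1 *: v.
have Au : Aset nrm betastar u.
  split.
    exists 1%N, (fun _ => s^-1), (fun _ => v); split.
      by move=> _; rewrite invr_ge0 ltW.
    by split; last by rewrite big_ord1.
  by rewrite /sphere /= /u norm2Z normfV ger0_norm ?ltW // mulVf ?gt_eqF.
have hau := hA _ Au; rewrite quad in hau.
have du0 := dual_ge0 hn c0 hc u.
have duP := leSup _ Au.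
have sum1 : \sum_j `|dotv v (col j Z)| <= 2 * gammaN.
  apply: le_trans (_ : \sum_j (`|dotv eh (col j Z)| + `|dotv es (col j Z)|) <= _).
    by apply: ler_sum => j _; rewrite /v dotvDl; apply: ler_normB.
  rewrite big_split /=.
  have h1 : \sum_j `|dotv eh (col j Z)| <= gammaN.
    by move: hfh; rewrite /norm1_row; under eq_bigr do rewrite rowdot.
  have h2 : \sum_j `|dotv es (col j Z)| <= gammaN.
    by move: hfs'; rewrite /norm1_row; under eq_bigr do rewrite rowdot.
  lra.
have key : alpha <= s^-1 * (2 * gammaN) * (dual_norm nrm u * Rad).
  apply: le_trans hau _.
  apply: le_trans (_ : \sum_j s^-1 * `|dotv v (col j Z)| * (dual_norm nrm u * Rad) <= _).
    apply: ler_sum => j _.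
    have hj : `|dotv u (col j Z)| <= dual_norm nrm u * Rad.
      apply: le_trans (dotv_abs hn c0 hc u (col j Z)) _; exact: ler_wpM2l.
    have e : dotv u (col j Z) ^+ 2 = `|dotv u (col j Z)| * `|dotv u (col j Z)|.
      by rewrite -normrM -expr2 ger0_norm // sqr_ge0.
    have si : 0 <= s^-1 by rewrite invr_ge0 ltW.
    have eu : `|dotv u (col j Z)| = s^-1 * `|dotv v (col j Z)| by rewrite /u dotvZl normrM (ger0_norm si).
    by rewrite e -eu; apply: ler_wpM2l => //.
  rewrite -mulr_suml -mulr_sumr.
  have dR : 0 <= dual_norm nrm u * Rad by apply: mulr_ge0.
  apply: ler_wpM2r => //; apply: ler_wpM2l => //; rewrite invr_ge0 ltW //.
have key2 : alpha * s <= 2 * gammaN * (P * Rad).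
  have : alpha * s <= 2 * gammaN * (dual_norm nrm u * Rad).
    move: key; rewrite -mulrA -(ler_pM2l s0) mulVKf ?gt_eqF //.
    by rewrite mulrC.
  move/le_trans; apply; apply: ler_wpM2l; first by apply: mulr_ge0 => //; apply: ltW.
  exact: ler_wpM2r.
have -> : 2 * Rad * gammaN / alpha * P = 2 * gammaN * (P * Rad) / alpha by ring.
by rewrite ler_pdivlMr // mulrC.
Qed.
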